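(* Let $(\Omega,\mathcal F)$ be a measurable space, $X$ a bounded measurable function and $w$ a capacity. Then $\alpha\mapsto Q^w_\alpha(X)$ is left-continuous on $(0,1]$ and $\alpha\mapsto\overline Q^w_\alpha(X)$ is right-continuous on $[0,1)$.
   Context: A capacity is an increasing function $w:\mathcal F\to\mathbb R$ (i.e. $w(A)\le w(B)$ for $A\subseteq B$) with $w(\varnothing)=0$, $w(\Omega)=1$. $Q^w_\alpha(X)=\inf\{x\in\mathbb R: w(X\ge x)\le1-\alpha\}$ for $\alpha\in(0,1]$, and $\overline Q^w_\alpha(X)=\inf\{x\in\mathbb R: w(X\ge x)<1-\alpha\}$ for $\alpha\in[0,1)$. *)

(* Defs.v *)
From HB Require Import structures.
From mathcomp Require Import all_boot all_order all_algebra.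
From mathcomp Require Import all_classical all_reals all_analysis.
Set Implicit Arguments. Unset Strict Implicit. Unset Printing Implicit Defensive.
Import Order.TTheory GRing.Theory Num.Theory numFieldNormedType.Exports.
Local Open Scope classical_set_scope.
Local Open Scope ring_scope.

(* A capacity on the measurable space (T, measurable): a set function, only
   meaningful on measurable sets, increasing on measurable sets, with
   w(empty) = 0 and w(Omega) = 1. *)
Definition is_capacity (d : measure_display) (T : measurableType d)
  (R : realType) (w : set T -> R) : Prop :=
  [/\ (forall A B : set T, measurable A -> measurable B -> A `<=` B -> w A <= w B),
      w set0 = 0 & w setT = 1].

Definition Qw (T : Type) (R : realType) (w : set T -> R) (X : T -> R) (a : R) : R :=
  inf [set x : R | w [set t | x <= X t] <= 1 - a].

Definition Qbarw (T : Type) (R : realType) (w : set T -> R) (X : T -> R) (a : R) : R :=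
  inf [set x : R | w [set t | x <= X t] < 1 - a].

(* Main.v *)
Require Import Defs.
From HB Require Import structures.
From mathcomp Require Import all_boot all_order all_algebra.
From mathcomp Require Import all_classical all_reals all_analysis.
From mathcomp Require Import lra.
Import Order.TTheory GRing.Theory Num.Theory numFieldNormedType.Exports.
Local Open Scope classical_set_scope.
Local Open Scope ring_scope.

Lemma main_g (R : realType) (g : R -> R) (M : R) :
  (forall x y, x <= y -> g y <= g x) ->
  (forall x, M < x -> g x = 0) ->
  (forall x, x <= - M -> g x = 1) ->
  (forall a : R, 0 < a <= 1 ->
     (fun b => inf [set x | g x <= 1 - b]) b @[b --> a^'-] -->
       inf [set x | g x <= 1 - a]) /\
  (forall a : R, 0 <= a < 1 ->
     (fun b => inf [set x | g x < 1 - b]) b @[b --> a^'+] -->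
       inf [set x | g x < 1 - a]).
Proof.
move=> gmono g0 g1.
have lbS (P : R -> Prop) : (forall x, P x -> g x < 1) -> lbound [set x | P x] (- M).
  move=> H x Px; rewrite leNgt; apply/negP => xM.
  by have := H x Px; rewrite g1 ?ltxx // ltW.
have gM1 : g (M + 1) = 0 by apply: g0; lra.
split.
- move=> a /andP[a0 a1]; apply/cvgrPdist_le => e e0.
  have hSa : has_lbound [set x | g x <= 1 - a].
    by exists (- M); apply: lbS => x /= h; lra.
  have nSa : 1 - a < g (inf [set x | g x <= 1 - a] - e).
    rewrite ltNge; apply/negP => gx.
    have := ge_inf hSa gx; lra.
  have ha : 1 - g (inf [set x | g x <= 1 - a] - e) < a by lra.
  near=> b.
  have b0 : 0 < b by near: b; exact: nbhs_left_gt.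
  have ba : b < a by near: b; exact: nbhs_left_lt.
  have bg : 1 - g (inf [set x | g x <= 1 - a] - e) < b by near: b; exact: nbhs_left_gt.
  have hSb : has_lbound [set x | g x <= 1 - b].
    by exists (- M); apply: lbS => x /= h; lra.
  have up : inf [set x | g x <= 1 - b] <= inf [set x | g x <= 1 - a].
    apply: lb_le_inf; first by exists (M + 1) => /=; rewrite gM1; lra.
    move=> y /= hy; apply: (ge_inf hSb) => /=; lra.
  have lo : inf [set x | g x <= 1 - a] - e <= inf [set x | g x <= 1 - b].
    apply: lb_le_inf; first by exists (M + 1) => /=; rewrite gM1; lra.
    move=> y /= hy; rewrite leNgt; apply/negP => yx.
    have := gmono _ _ (ltW yx); lra.
  rewrite ler_norml; apply/andP; split; lra.
- move=> a /andP[a0 a1]; apply/cvgrPdist_le => e e0.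
  have hSa : has_lbound [set x | g x < 1 - a].
    by exists (- M); apply: lbS => x /= h; lra.
  have neS : [set x | g x < 1 - a] !=set0 by exists (M + 1) => /=; rewrite gM1; lra.
  have [y /= Sy ylt] : exists2 y, [set x | g x < 1 - a] y & y < inf [set x | g x < 1 - a] + e.
    by apply: inf_lt => //; lra.
  have ay : a < 1 - g y by lra.
  near=> b.
  have ab : a < b by near: b; exact: nbhs_right_gt.
  have b1 : b < 1 by near: b; exact: nbhs_right_lt.
  have by' : b < 1 - g y by near: b; exact: nbhs_right_lt.
  have hSb : has_lbound [set x | g x < 1 - b].
    by exists (- M); apply: lbS => x /= h; lra.
  have lo : inf [set x | g x < 1 - a] <= inf [set x | g x < 1 - b].
    apply: lb_le_inf; first by exists (M + 1) => /=; rewrite gM1; lra.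
    move=> z /= hz; apply: (ge_inf hSa) => /=; lra.
  have up : inf [set x | g x < 1 - b] <= y.
    apply: (ge_inf hSb) => /=; lra.
  rewrite ler_norml; apply/andP; split; lra.
Unshelve. all: by end_near.
Qed.

Theorem proposition6 (d : measure_display) (T : measurableType d) (R : realType)
  (w : set T -> R) (X : T -> R) :
  is_capacity w ->
  measurable_fun setT X ->
  (exists M : R, forall t, `|X t| <= M) ->
  (forall a : R, 0 < a <= 1 -> Qw w X b @[b --> a^'-] --> Qw w X a) /\
  (forall a : R, 0 <= a < 1 -> Qbarw w X b @[b --> a^'+] --> Qbarw w X a).
Proof.
move=> [wmono w0 w1] mX [M hM].
have mS x : measurable [set t | x <= X t].
  have -> : [set t | x <= X t] = X @^-1` `[x, +oo[.
    by apply/seteqP; split=> t /=; rewrite in_itv /= andbT.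
  by have := mX measurableT `[x, +oo[%classic (measurable_itv `[x, +oo[); rewrite setTI.
apply: (@main_g R (fun x => w [set t | x <= X t]) M).
- move=> x y xy; apply: wmono => // t /=; exact: le_trans.
- move=> x Mx; rewrite -w0; congr w; apply/seteqP; split=> t //= xt.
  move: (hM t); rewrite ler_norml => /andP[_ h]; lra.
- move=> x xM; rewrite -w1; congr w; apply/seteqP; split=> t //= _.
  move: (hM t); rewrite ler_norml => /andP[h _]; lra.
Qed.
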